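(* Let $f:G\to H$ be a group homomorphism. Then $\mathrm{sec}(f)\leq \sigma(\mathfrak{L}(f))$, and equality holds whenever the poset $\mathfrak{L}(f)$ is Noetherian (for example, when $H$ is finite or, more generally, Noetherian).
   Context: For a subgroup $L\le H$, a local section of $f$ on $L$ is a homomorphism $s:L\to G$ with $f\circ s=\mathrm{incl}_L$. The sectional number $\mathrm{sec}(f)$ is the least positive integer $m$ such that there exist proper subgroups $H_1,\ldots,H_m$ of $H$ with $H=H_1\cup\cdots\cup H_m$ and such that $f$ admits a local section on each $H_i$; $\mathrm{sec}(f)=\infty$ if no such $m$ exists. $\mathfrak{L}(f)$ is the poset, ordered by inclusion, of all proper subgroups of $H$ on which $f$ admits a local section. For a poset $P$ whose elements are subsets of a fixed set $X$ (here $X=H$), $\sigma(P)$ is the least positive integer $m$ such that there exist maximal elements $M_1,\ldots,M_m$ of $P$ with $X=M_1\cup\cdots\cup M_m$ ($\infty$ if none). A poset is Noetherian if every ascending chain $x_1\le x_2\le\cdots$ eventually stabilizes. *)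

(* Defs.v *)
From mathcomp Require Import all_boot.
From Stdlib Require Import ClassicalDescription.
From mathcomp Require Import all_boot.

Set Implicit Arguments.
Unset Strict Implicit.
Unset Printing Implicit Defensive.

Record group := Group {
  gcar :> Type;
  gmul : gcar -> gcar -> gcar;
  gone : gcar;
  ginv : gcar -> gcar;
  gmulA : forall x y z, gmul x (gmul y z) = gmul (gmul x y) z;
  gmul1 : forall x, gmul gone x = x;
  gmulg1 : forall x, gmul x gone = x;
  gmulV : forall x, gmul (ginv x) x = gone;
  gmulgV : forall x, gmul x (ginv x) = gone
}.

Arguments gmul {g} _ _.
Arguments gone {g}.
Arguments ginv {g} _.

Definition is_hom (G H : group) (f : G -> H) : Prop :=
  forall x y : G, f (gmul x y) = gmul (f x) (f y).

Definition subset (X : Type) (A B : X -> Prop) : Prop := forall x, A x -> B x.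

Definition is_subgroup (H : group) (L : H -> Prop) : Prop :=
  [/\ L gone, (forall x y, L x -> L y -> L (gmul x y)) & (forall x, L x -> L (ginv x))].

Definition is_proper_subgroup (H : group) (L : H -> Prop) : Prop :=
  is_subgroup L /\ exists x, ~ L x.

(* A local section of f on the subgroup L: a homomorphism s : L -> G
   (L viewed as the subtype {x | L x}, with the induced multiplication)
   such that f (s u) = u for all u in L. *)
Definition local_section (G H : group) (f : G -> H) (L : H -> Prop)
    (s : {x : H | L x} -> G) : Prop :=
  (forall u v w : {x : H | L x},
      proj1_sig w = gmul (proj1_sig u) (proj1_sig v) -> s w = gmul (s u) (s v))
  /\ (forall u, f (s u) = proj1_sig u).

Definition has_local_section (G H : group) (f : G -> H) (L : H -> Prop) : Prop :=
  exists s, @local_section G H f L s.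

(* Extended naturals N u {oo}: None stands for oo. *)
Definition le_ext (a b : option nat) : Prop :=
  match b with
  | None => True
  | Some n => match a with Some m => m <= n | None => False end
  end.

Definition boolP_of (P : nat -> Prop) : pred nat :=
  fun m => if excluded_middle_informative (P m) then true else false.

Lemma boolP_ofP (P : nat -> Prop) m : P m -> boolP_of P m.
Proof. by rewrite /boolP_of; case: excluded_middle_informative. Qed.

Definition ext_min (P : nat -> Prop) : option nat :=
  match excluded_middle_informative (exists m, P m) with
  | left h => Some (ex_minn (let: ex_intro m hm := h in ex_intro _ m (boolP_ofP hm)))
  | right _ => None
  end.

Definition sec_cover (G H : group) (f : G -> H) (m : nat) : Prop :=
  0 < m /\ exists Hs : 'I_m -> (H -> Prop),
    (forall i, is_proper_subgroup (Hs i) /\ has_local_section f (Hs i))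
    /\ (forall x : H, exists i, Hs i x).

Definition sec (G H : group) (f : G -> H) : option nat := ext_min (sec_cover f).

Definition Lf (G H : group) (f : G -> H) : (H -> Prop) -> Prop :=
  fun L => is_proper_subgroup L /\ has_local_section f L.

Definition maximal_in (X : Type) (P : (X -> Prop) -> Prop) (M : X -> Prop) : Prop :=
  P M /\ forall N, P N -> subset M N -> subset N M.

Definition sigma_cover (X : Type) (P : (X -> Prop) -> Prop) (m : nat) : Prop :=
  0 < m /\ exists Ms : 'I_m -> (X -> Prop),
    (forall i, maximal_in P (Ms i)) /\ (forall x : X, exists i, Ms i x).

Definition sigma (X : Type) (P : (X -> Prop) -> Prop) : option nat :=
  ext_min (sigma_cover P).

Definition noetherian (X : Type) (P : (X -> Prop) -> Prop) : Prop :=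
  forall c : nat -> (X -> Prop),
    (forall n, P (c n)) -> (forall n, subset (c n) (c n.+1)) ->
    exists N, forall n, N <= n -> subset (c n) (c N).

(* Main.v *)
Require Import Defs.
From mathcomp Require Import all_boot.
From Stdlib Require Import Classical ClassicalDescription IndefiniteDescription.

Lemma boolP_ofP' (P : nat -> Prop) m : boolP_of P m -> P m.
Proof. by rewrite /boolP_of; case: excluded_middle_informative. Qed.

Lemma ext_minP (P : nat -> Prop) : (exists m, P m) ->
  exists k, ext_min P = Some k /\ P k /\ forall m, P m -> k <= m.
Proof.
move=> ex; rewrite /ext_min; case: excluded_middle_informative => // h.
case: h => m hm /=.
case: ex_minnP => k Hk Hmin; exists k; split=> //; split.
  exact: boolP_ofP'.
by move=> j /boolP_ofP Hj; apply: Hmin.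
Qed.

Lemma ext_minN (P : nat -> Prop) : ~ (exists m, P m) -> ext_min P = None.
Proof. by move=> h; rewrite /ext_min; case: excluded_middle_informative. Qed.

Section Max.
Variables (X : Type) (P : (X -> Prop) -> Prop).

Definition step (M : X -> Prop) : X -> Prop :=
  match excluded_middle_informative
          (exists N, P N /\ Defs.subset M N /\ ~ Defs.subset N M) with
  | left h => proj1_sig (constructive_indefinite_description _ h)
  | right _ => M
  end.

Lemma exists_max (hn : noetherian P) L : P L ->
  exists M, maximal_in P M /\ Defs.subset L M.
Proof.
move=> PL; apply: NNPP => Hno.
have key : forall M, P M -> Defs.subset L M ->
    P (step M) /\ Defs.subset M (step M) /\ ~ Defs.subset (step M) M.
  move=> M PM LM; rewrite /step; case: excluded_middle_informative => h.
    by case: (constructive_indefinite_description _ h).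
  exfalso; apply: Hno; exists M; split=> //; split=> // N PN MN.
  apply: NNPP => nNM; apply: h; exists N; tauto.
pose c n := iter n step L.
have hc : forall n, P (c n) /\ Defs.subset L (c n).
  elim=> [|n [IH1 IH2]] /=; first by split=> // x.
  have [A [B _]] := key _ IH1 IH2; split=> // x Lx; exact/B/IH2.
case: (hn c (fun n => (hc n).1) (fun n => (key _ (hc n).1 (hc n).2).2.1)) => N HN.
have [_ [_ C]] := key _ (hc N).1 (hc N).2.
by apply: C; apply: (HN N.+1).
Qed.
End Max.

Theorem theorem3p12 (G H : group) (f : G -> H) (hf : is_hom f) :
  le_ext (sec f) (sigma (Lf f)) /\
  (noetherian (Lf f) -> sec f = sigma (Lf f)).
Proof.
have s2s : forall m, sigma_cover (Lf f) m -> sec_cover f m.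
  move=> m [m0 [Ms [HM Hc]]]; split=> //; exists Ms; split=> // i.
  by case: (HM i) => [[]].
split.
  rewrite /sigma /sec; case: (classic (exists m, sigma_cover (Lf f) m)) => ex.
    have [k [-> [Hk _]]] := ext_minP _ ex.
    have [j [-> [_ Hj]]] := ext_minP _ (ex_intro _ k (s2s _ Hk)).
    exact: (Hj _ (s2s _ Hk)).
  by rewrite (ext_minN _ ex); case: ext_min.
move=> hn.
have c2s : forall m, sec_cover f m -> sigma_cover (Lf f) m.
  move=> m [m0 [Hs [HH Hc]]]; split=> //.
  have hmax : forall i, exists M, maximal_in (Lf f) M /\ Defs.subset (Hs i) M.
    move=> i; apply: exists_max => //; exact: HH.
  pose Ms i := proj1_sig (constructive_indefinite_description _ (hmax i)).
  have HMs : forall i, maximal_in (Lf f) (Ms i) /\ Defs.subset (Hs i) (Ms i).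
    by move=> i; rewrite /Ms; case: constructive_indefinite_description.
  exists Ms; split; first by move=> i; case: (HMs i).
  move=> x; case: (Hc x) => i Hi; exists i; exact: (HMs i).2.
rewrite /sec /sigma.
case: (classic (exists m, sec_cover f m)) => ex.
  have [k [-> [Hk Hkmin]]] := ext_minP _ ex.
  have [j [-> [Hj Hjmin]]] := ext_minP _ (ex_intro _ k (c2s _ Hk)).
  congr Some; apply/eqP; rewrite eqn_leq; apply/andP; split.
    exact/Hkmin/s2s.
  exact/Hjmin/c2s.
rewrite (ext_minN _ ex) ext_minN //.
by case=> m /s2s Hm; apply: ex; exists m.
Qed.
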